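(* Assume $\mathfrak{d}=\omega_1$, and let $\langle f_\alpha:\alpha<\omega_1\rangle$ be functions in ${}^\omega\omega$ with $f_\alpha<^*f_\beta$ whenever $\alpha<\beta$ and such that every $g\in{}^\omega\omega$ satisfies $g<^*f_\alpha$ for some $\alpha$. Let $\{P_i:i<\omega\}$ be a partition of $\omega$ into infinite sets, $Z_\alpha=\{n:\exists i\,(n\in P_i\text{ and }n>f_\alpha(i))\}$, and let $X$ be the space on $(\omega\times\omega_1)\cup\{\infty\}$ with points of $\omega\times\omega_1$ isolated and a local subbase at $\infty$ consisting of the sets $X\setminus(P_i\times\omega_1)$ ($i<\omega$) and $X\setminus(Z_\alpha\times\alpha)$ ($\alpha<\omega_1$). Then $X$ is not $\mathbb{Q}$-selective.
   Context: $f<^*g$ means $f(n)<g(n)$ for all but finitely many $n$. $\mathcal{F}(X)$ is the set of nonempty closed subsets of $X$; $\varphi:Y\rightarrow\mathcal{F}(X)$ is lower semicontinuous if for every open $W\subseteq X$, $\{y:\varphi(y)\cap W\neq\emptyset\}$ is open in $Y$. $X$ is $Y$-selective if every lower semicontinuous $\varphi:Y\rightarrow\mathcal{F}(X)$ has a continuous selection $s:Y\rightarrow X$ with $s(y)\in\varphi(y)$ for all $y$. $\mathbb{Q}$ denotes the rationals with the usual topology. *)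

(* Defs.v *)
From HB Require Import structures.
From mathcomp Require Import all_boot all_order all_algebra.
From Stdlib Require Import List.
Set Implicit Arguments. Unset Strict Implicit. Unset Printing Implicit Defensive.
Import Order.TTheory GRing.Theory Num.Theory.

Definition is_closed {T : Type} (opn : (T -> Prop) -> Prop) (F : T -> Prop) :=
  opn (fun x => ~ F x).

Definition is_continuous {Y X : Type} (openY : (Y -> Prop) -> Prop)
  (openX : (X -> Prop) -> Prop) (s : Y -> X) :=
  forall U, openX U -> openY (fun y => U (s y)).

Definition lower_semicontinuous {Y X : Type} (openY : (Y -> Prop) -> Prop)
  (openX : (X -> Prop) -> Prop) (phi : Y -> X -> Prop) :=
  forall W, openX W -> openY (fun y => exists x, phi y x /\ W x).

Definition selective {Y X : Type} (openY : (Y -> Prop) -> Prop)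
  (openX : (X -> Prop) -> Prop) :=
  forall phi : Y -> X -> Prop,
    (forall y, (exists x, phi y x) /\ is_closed openX (phi y)) ->
    lower_semicontinuous openY openX phi ->
    exists s : Y -> X, is_continuous openY openX s /\ forall y, phi y (s y).

Local Open Scope ring_scope.
Definition Qopen (U : rat -> Prop) : Prop :=
  forall q, U q -> exists e : rat, 0 < e /\ forall r : rat, `|r - q| < e -> U r.
Local Close Scope ring_scope.

Definition is_omega1 (W : Type) (lt : W -> W -> Prop) : Prop :=
  (forall a, ~ lt a a) /\
  (forall a b c, lt a b -> lt b c -> lt a c) /\
  (forall a b, lt a b \/ a = b \/ lt b a) /\
  well_founded lt /\
  ~ (exists g : W -> nat, forall a b, g a = g b -> a = b) /\
  (forall a, exists g : W -> nat,
       forall b c, lt b a -> lt c a -> g b = g c -> b = c).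

Definition lt_star (f g : nat -> nat) : Prop :=
  exists N, forall n, (N <= n)%N -> (f n < g n)%N.

(* {P i : i < omega} is a partition of omega into infinite sets;
   P i n means n \in P_i. *)
Definition partition_infinite (P : nat -> nat -> Prop) : Prop :=
  (forall n, exists i, P i n) /\
  (forall n i j, P i n -> P j n -> i = j) /\
  (forall i m, exists n, (m <= n)%N /\ P i n).

Definition Zset (P : nat -> nat -> Prop) (fa : nat -> nat) (n : nat) : Prop :=
  exists i, P i n /\ (fa i < n)%N.

(* The space X on (omega x omega_1) u {infty}; None is infty. *)
Definition Xpt (W : Type) := option (nat * W).

Definition subP {W : Type} (P : nat -> nat -> Prop) (i : nat) (x : Xpt W) : Prop :=
  match x with None => True | Some (n, _) => ~ P i n end.

Definition subZ {W : Type} (lt : W -> W -> Prop) (P : nat -> nat -> Prop)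
  (f : W -> nat -> nat) (a : W) (x : Xpt W) : Prop :=
  match x with None => True | Some (n, b) => ~ (Zset P (f a) n /\ lt b a) end.

(* Open sets of X: points of omega x omega_1 are isolated, and a set containing
   infty is open iff it contains a finite intersection of subbasic sets. *)
Definition Xopen {W : Type} (lt : W -> W -> Prop) (P : nat -> nat -> Prop)
  (f : W -> nat -> nat) (U : Xpt W -> Prop) : Prop :=
  U None ->
  exists (I : list nat) (A : list W),
    forall x, (forall i, In i I -> subP P i x) ->
              (forall a, In a A -> subZ lt P f a x) -> U x.

(* Main.v *)
Require Import Defs.
From HB Require Import structures.
From mathcomp Require Import all_boot all_order all_algebra.
From mathcomp Require Import zify ring lra.
From Stdlib Require Import List Classical ClassicalEpsilon.
Set Implicit Arguments. Unset Strict Implicit. Unset Printing Implicit Defensive.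
Import Order.TTheory GRing.Theory Num.Theory.
Module Aux.
Local Open Scope ring_scope.
Lemma nat_sq2 (n d : nat) : (0 < d)%N -> (n * n)%N <> (2 * (d * d))%N.
Proof.
move=> d0 E.
have n0 : (0 < n)%N by case: n E => // E; nia.
have := congr1 (logn 2) E.
rewrite lognM // lognM ?muln_gt0 ?d0 // lognM // (logn_prime 2 (isT : prime 2)) /=.
lia.
Qed.

Lemma rat_sq2 (x : rat) : x ^+ 2 != 2.
Proof.
apply/negP => /eqP E.
have d0 := denq_gt0 x.
have dne : (denq x)%:~R != 0 :> rat by rewrite intr_eq0 gt_eqF.
have E2 : ((numq x) ^+ 2)%:~R = ((2 * (denq x) ^+ 2)%R)%:~R :> rat.
  rewrite -{1}(divq_num_den x) in E.
  rewrite rmorphXn /= rmorphM /= rmorphXn /=.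
  have -> : (2%:~R : rat) = 2 by [].
  rewrite -[X in _ = X * _]E.
  field. exact: dne.
move/intr_inj: E2 => /(congr1 absz). rewrite abszX abszM abszX /=.
rewrite !expnS !expn0 !muln1 => E3.
apply: (@nat_sq2 `|numq x|%N `|denq x|%N); last exact: E3.
by rewrite absz_gt0 gt_eqF.
Qed.

Definition T (c r : rat) : bool := 1 < 2 * (c * r) ^+ 2.

Lemma T_ne (c r : rat) : 2 * (c * r) ^+ 2 != 1.
Proof.
apply/negP => /eqP E. have := rat_sq2 (2 * c * r).
have -> : (2 * c * r) ^+ 2 = 2 * (2 * (c * r) ^+ 2) by rewrite -mulrA exprMn expr2; ring.
by rewrite E mulr1 eqxx.
Qed.

Lemma T_stable (c q : rat) : exists e : rat, 0 < e /\ forall r, `|r - q| < e -> T c r = T c q.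
Proof.
pose A := 2 * c ^+ 2.
have A0 : 0 <= A by rewrite /A mulr_ge0 // sqr_ge0.
have gE : forall r, 2 * (c * r) ^+ 2 = A * r ^+ 2 by move=> r; rewrite /A exprMn mulrA.
pose d := `|A * q ^+ 2 - 1|.
have d0 : 0 < d by rewrite /d normr_gt0 subr_eq0 -gE T_ne.
pose B := A * (2 * `|q| + 1).
have B0 : 0 <= B by rewrite /B mulr_ge0 // addr_ge0 // mulr_ge0.
exists (Num.min 1 (d / (B + 1))); split.
  by rewrite lt_min ltr01 /= divr_gt0 // ltr_wpDl.
move=> r; rewrite lt_min => /andP[H1 H2].
have Bp : 0 < B + 1 by rewrite ltr_wpDl.
have H2' : `|r - q| * (B + 1) < d by rewrite -ltr_pdivlMr.
have Hrq : `|r + q| <= `|r - q| + 2 * `|q|.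
  have -> : r + q = (r - q) + 2 * q by ring.
  by rewrite (le_trans (ler_normD _ _)) // normrM ger0_norm.
have a0 : 0 <= `|r - q| by [].
have q0 : 0 <= `|q| by [].
have b0 : 0 <= `|r + q| by [].
have key : `|A * r ^+ 2 - A * q ^+ 2| < d.
  have -> : A * r ^+ 2 - A * q ^+ 2 = A * ((r - q) * (r + q)) by ring.
  rewrite normrM (ger0_norm A0) normrM.
  rewrite /B in H2'.
  nra.
move: key; rewrite ltr_norml => /andP[k1 k2].
rewrite /T !gE.
case: (ltrgtP (A * q ^+ 2) 1) => h.
- have dE : d = 1 - A * q ^+ 2 by rewrite /d ltr0_norm ?subr_lt0 // opprB.
  apply/negbTE; rewrite -leNgt. lra.
- have dE : d = A * q ^+ 2 - 1 by rewrite /d gtr0_norm ?subr_gt0.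
  apply/idP. lra.
- by move: d0; rewrite /d h subrr normr0 ltxx.
Qed.

Lemma arch (x : rat) : exists n : nat, x < n%:R.
Proof. exists (Num.bound `|x|). apply: (le_lt_trans (ler_norm x)). exact: archi_boundP. Qed.

Lemma Nex (r : rat) : exists j : nat, (r == 0) || T (j.+1)%:R r.
Proof.
have [->|r0] := eqVneq r 0; first by exists 0%N.
have [j hj] := arch (`|r|^-1).
exists j; apply/orP; right; rewrite /T.
have rp : 0 < `|r| by rewrite normr_gt0.
have h1 : 1 < j%:R * `|r| by rewrite -ltr_pdivrMr // div1r.
have h2 : 1 < (j.+1)%:R * `|r|.
  by rewrite (lt_le_trans h1) // ler_wpM2r // ler_nat.
have -> : ((j.+1)%:R * r) ^+ 2 = ((j.+1)%:R * `|r|) ^+ 2 by rewrite !exprMn real_normK // num_real.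
move: h2; set y := (j.+1)%:R * `|r| => h2. rewrite expr2. nra.
Qed.

Definition Nf (r : rat) : nat := ex_minn (Nex r).

Lemma Nf_T (r : rat) : r != 0 -> T (Nf r).+1%:R r.
Proof. move=> r0; rewrite /Nf; case: ex_minnP => m; by rewrite (negbTE r0). Qed.

Lemma Nf_min (r : rat) j : T j.+1%:R r -> (Nf r <= j)%N.
Proof. move=> h; rewrite /Nf; case: ex_minnP => m _ H; apply: H; by rewrite h orbT. Qed.

Definition cK (N k : nat) : rat := N.+1%:R * k.+1%:R / k.+2%:R.

Lemma Kex (r : rat) : exists k : nat, (r == 0) || T (cK (Nf r) k) r.
Proof.
have [->|r0] := eqVneq r 0; first by exists 0%N.
have := Nf_T r0; rewrite /T; set a := 2 * _ => ha.
have [k hk] := arch (3 / (a - 1)).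
exists k; apply/orP; right; rewrite /T /cK.
have -> : 2 * ((Nf r).+1%:R * k.+1%:R / k.+2%:R * r) ^+ 2 = a * (k.+1%:R / k.+2%:R) ^+ 2.
  by rewrite /a; rewrite !exprMn; ring.
have k2 : 0 < k.+2%:R :> rat by rewrite ltr0n.
rewrite expr_div_n mulrA ltr_pdivlMr ?exprn_gt0 // mul1r.
have a1 : 0 < a - 1 by rewrite subr_gt0.
move: hk; rewrite ltr_pdivrMr // => hk.
rewrite -!natr1. set K := k%:R in hk *.
have K0 : 0 <= K by rewrite /K ler0n.
nra.
Qed.

Definition Kf (r : rat) : nat := ex_minn (Kex r).

Lemma Kf_min (r : rat) k : T (cK (Nf r) k) r -> (Kf r <= k)%N.
Proof. move=> h; rewrite /Kf; case: ex_minnP => m _ H; apply: H; by rewrite h orbT. Qed.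

Lemma combine_e (P : nat -> rat -> Prop) q n :
  (forall k, exists e : rat, 0 < e /\ forall r, `|r - q| < e -> P k r) ->
  exists e : rat, 0 < e /\ forall r, `|r - q| < e -> forall k, (k <= n)%N -> P k r.
Proof.
move=> H; elim: n => [|n [e [e0 He]]].
  have [e [e0 He]] := H 0%N. exists e; split => // r hr k; rewrite leqn0 => /eqP ->; exact: He.
have [e' [e0' He']] := H n.+1.
exists (Num.min e e'); split; first by rewrite lt_min e0 e0'.
move=> r; rewrite lt_min => /andP[h1 h2] k; rewrite leq_eqVlt => /orP[/eqP ->|]; first exact: He'.
rewrite ltnS; exact: He.
Qed.

Lemma minn_stable (p : nat -> rat -> bool) (ex : forall r, exists k, p k r) q :
  (forall k, exists e : rat, 0 < e /\ forall r, `|r - q| < e -> p k r = p k q) ->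
  exists e : rat, 0 < e /\ forall r, `|r - q| < e -> ex_minn (ex r) = ex_minn (ex q).
Proof.
move=> H.
have [pq minq] : p (ex_minn (ex q)) q /\ forall n, p n q -> (ex_minn (ex q) <= n)%N.
  by case: ex_minnP.
move: pq minq; set mq := ex_minn (ex q) => pq minq.
have [e [e0 He]] := combine_e mq H.
exists e; split => // r hr.
have Hq := He r hr.
case: ex_minnP => m pm mm.
have h1 : (m <= mq)%N by apply: mm; rewrite Hq.
apply/eqP; rewrite eqn_leq h1 /=.
apply: minq. by rewrite -Hq.
Qed.

Lemma near_nz (q r : rat) : `|r - q| < `|q| -> r != 0.
Proof. apply: contraTneq => ->; by rewrite sub0r normrN ltxx. Qed.

Lemma Nf_loc q : q != 0 -> exists e : rat, 0 < e /\ forall r, `|r - q| < e -> r != 0 /\ Nf r = Nf q.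
Proof.
move=> q0.
have qp : 0 < `|q| by rewrite normr_gt0.
have [e [e0 He]] : exists e : rat, 0 < e /\ forall r, `|r - q| < e -> ex_minn (Nex r) = ex_minn (Nex q).
  apply: (minn_stable (p := fun j r => (r == 0) || T j.+1%:R r)) => k.
  have [e [e0 He]] := T_stable k.+1%:R q.
  exists (Num.min `|q| e); split; first by rewrite lt_min qp e0.
  move=> r; rewrite lt_min => /andP[h1 h2].
  by rewrite (negbTE (near_nz h1)) (negbTE q0) /= He.
exists (Num.min `|q| e); split; first by rewrite lt_min qp e0.
move=> r; rewrite lt_min => /andP[h1 h2]; split; first exact: near_nz h1.
exact: He.
Qed.

Lemma Kf_loc q : q != 0 -> exists e : rat, 0 < e /\ forall r, `|r - q| < e -> r != 0 /\ Nf r = Nf q /\ Kf r = Kf q.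
Proof.
move=> q0.
have [e1 [e10 He1]] := Nf_loc q0.
have [e [e0 He]] : exists e : rat, 0 < e /\ forall r, `|r - q| < e -> ex_minn (Kex r) = ex_minn (Kex q).
  apply: (minn_stable (p := fun k r => (r == 0) || T (cK (Nf r) k) r)) => k.
  have [e [e0 He]] := T_stable (cK (Nf q) k) q.
  exists (Num.min e1 e); split; first by rewrite lt_min e10 e0.
  move=> r; rewrite lt_min => /andP[h1 h2].
  have [r0 ->] := He1 r h1.
  by rewrite (negbTE r0) (negbTE q0) /= He.
exists (Num.min e1 e); split; first by rewrite lt_min e10 e0.
move=> r; rewrite lt_min => /andP[h1 h2].
have [r0 nE] := He1 r h1.
split => //; split => //; exact: He.
Qed.

Lemma Kf_T (r : rat) : r != 0 -> T (cK (Nf r) (Kf r)) r.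
Proof. move=> r0; rewrite /Kf; case: ex_minnP => m; by rewrite (negbTE r0). Qed.

Lemma Nbig (m : nat) : exists e : rat, 0 < e /\ forall r, r != 0 -> `|r| < e -> (m < Nf r)%N.
Proof.
have Mp : 0 < m.+1%:R :> rat by rewrite ltr0n.
exists ((2 * m.+1%:R)^-1); split; first by rewrite invr_gt0 mulr_gt0.
move=> r r0 hr.
have hT := Nf_T r0.
rewrite ltnNge; apply/negP => hle.
move: hT; rewrite /T.
have -> : ((Nf r).+1%:R * r) ^+ 2 = ((Nf r).+1%:R * `|r|) ^+ 2 by rewrite !exprMn real_normK // num_real.
have J0 : 0 < (Nf r).+1%:R :> rat by rewrite ltr0n.
have JM : (Nf r).+1%:R <= m.+1%:R :> rat by rewrite ler_nat ltnS.
move: hr; rewrite -[X in _ < X]div1r ltr_pdivlMr ?mulr_gt0 // => hr.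
have a0 : 0 <= `|r| by [].
move: J0 JM hr a0; set J := (Nf r).+1%:R; set M := m.+1%:R; set a := `|r|.
move=> J0 JM hr a0.
have h1 : J * a <= M * a by rewrite ler_wpM2r.
have h2 : 0 <= J * a by rewrite mulr_ge0 // ltW.
move: h1 h2; set y := J * a => h1 h2.
rewrite expr2 => h3. nra.
Qed.

Lemma T_frac (c r : rat) (X Y : nat) : (0 < Y)%N -> c * r = X%:R / Y%:R -> T c r = (Y * Y < 2 * (X * X))%N.
Proof.
move=> Y0 E; rewrite /T E expr_div_n mulrA ltr_pdivlMr ?exprn_gt0 ?ltr0n // mul1r.
by rewrite -!natrX -natrM ltr_nat !expnS !expn0 !muln1.
Qed.

Fixpoint pell (n : nat) : nat * nat :=
  match n with
  | 0 => (3, 2)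
  | n'.+1 => let: (p, q) := pell n' in (3 * p + 4 * q, 2 * p + 3 * q)
  end%N.

Lemma pell_inv n : ((pell n).1 * (pell n).1 = 2 * ((pell n).2 * (pell n).2) + 1 /\ n.+2 <= (pell n).2)%N.
Proof.
elim: n => [|n]; first by [].
rewrite /=; case: (pell n) => p q /= [h1 h2]; split; nia.
Qed.

Lemma Cwit (e : rat) (g : nat -> nat) : 0 < e -> exists r : rat, r != 0 /\ `|r| < e /\ (g (Nf r) <= Kf r)%N.
Proof.
move=> e0.
have [M hM] := arch e^-1.
have [h1 h2] := pell_inv (maxn M (g M)).
move: h1 h2; case: (pell _) => p q /= h1 h2.
have hl := leq_maxl M (g M); have hr := leq_maxr M (g M).
have qM : (M < q)%N by lia.
have qg : (g M < q)%N by lia.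
have q0 : (0 < q)%N by lia.
have p0 : (0 < p)%N by case: p h1 => //= ; nia.
pose r : rat := p%:R / (2 * q * M.+1)%:R.
have den0 : (0 < 2 * q * M.+1)%N by rewrite !muln_gt0 q0.
have r0 : r != 0 by rewrite /r mulf_neq0 // ?invr_eq0 pnatr_eq0 -lt0n.
have rN : Nf r = M.
  have TM : T M.+1%:R r.
    rewrite (T_frac (X := (M.+1 * p)%N) (Y := (2 * q * M.+1)%N)) //.
      nia.
    by rewrite /r (natrM _ M.+1 p) mulrA.
  have ha : (Nf r <= M)%N by exact: Nf_min.
  suff hb : (M <= Nf r)%N by lia.
  rewrite leqNgt; apply/negP => hlt.
  have := Nf_T r0.
  rewrite (T_frac (X := ((Nf r).+1 * p)%N) (Y := (2 * q * M.+1)%N)) //.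
    have e1 : ((Nf r).+1 * p * ((Nf r).+1 * p) <= M * p * (M * p))%N by rewrite leq_mul // leq_mul.
    have e2 : (M * M <= q * q)%N by rewrite leq_mul // ltnW.
    have e3 : (M * p * (M * p) = M * M * (p * p))%N by ring.
    rewrite e3 h1 in e1. nia.
  by rewrite /r (natrM _ (Nf r).+1 p) mulrA.
exists r; split => //; split.
  rewrite /r ger0_norm; last by rewrite divr_ge0 // ler0n.
  have p2q : (p <= 2 * q)%N by nia.
  have he : 1 < e * M%:R.
    by move: hM; rewrite -[X in X < _]div1r ltr_pdivrMr // mulrC.
  rewrite ltr_pdivrMr ?ltr0n // !natrM.
  have hp : p%:R <= 2 * q%:R :> rat by rewrite -natrM ler_nat.
  have qp : 0 < q%:R :> rat by rewrite ltr0n.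
  rewrite -natr1. nra.
rewrite rN.
rewrite leqNgt; apply/negP => hlt.
have := Kf_T r0.
rewrite (T_frac (X := ((Kf r).+1 * p)%N) (Y := (2 * q * (Kf r).+2)%N)) //.
  nia.
  by rewrite !muln_gt0 q0.
rewrite rN /cK /r !natrM; field.
have k0 := ler0n rat (Kf (p%:R / (2 * q%:R * M.+1%:R))).
have m0 := ler0n rat M.
have qq : 0 < q%:R :> rat by rewrite ltr0n.
apply/and3P; split; apply: lt0r_neq0; lra.
Qed.

End Aux.
Import Aux.

Lemma bound_seq (W : Type) (lt : W -> W -> Prop) :
  is_omega1 lt -> forall h : nat -> W, exists rho, forall m, lt (h m) rho.
Proof.
move=> [irr [tr [tri [wf [nocnt seg]]]]] h.
apply: NNPP => H.
have H1 : forall rho, exists m, ~ lt (h m) rho.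
  move=> rho; apply: NNPP => H2; apply: H; exists rho => m.
  apply: NNPP => H3; apply: H2; by exists m.
pose mof := fun rho => proj1_sig (constructive_indefinite_description _ (H1 rho)).
have mofP : forall rho, ~ lt (h (mof rho)) rho.
  move=> rho; exact: (proj2_sig (constructive_indefinite_description _ (H1 rho))).
pose G := fun m => proj1_sig (constructive_indefinite_description _ (seg (h m))).
have GP : forall m b c, lt b (h m) -> lt c (h m) -> G m b = G m c -> b = c.
  move=> m; exact: (proj2_sig (constructive_indefinite_description _ (seg (h m)))).
apply: nocnt.
exists (fun rho => pickle (mof rho,
  if excluded_middle_informative (rho = h (mof rho)) then 0%N else (G (mof rho) rho).+1)).
move=> a b /(pcan_inj (@pickleK _)) [].
case: excluded_middle_informative => ea; case: excluded_middle_informative => eb //.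
- by move=> E _; rewrite ea eb E.
- move=> E [] Eg.
  have la : lt a (h (mof a)).
    by case: (tri a (h (mof a))) => [//|[//|/mofP]].
  have lb : lt b (h (mof a)).
    rewrite E; by case: (tri b (h (mof b))) => [//|[//|/mofP]].
  apply: (GP (mof a)) => //. by rewrite Eg E.
Qed.

Lemma list_ub (W : Type) (lt : W -> W -> Prop) (w0 : W) :
  is_omega1 lt -> forall A : list W, exists b, forall a, In a A -> ~ lt b a.
Proof.
move=> [irr [tr [tri _]]]; elim => [|a A [b Hb]]; first by exists w0.
case: (classic (lt a b)) => hab.
- exists b => x [<-|hx]; last exact: Hb.
  move=> hba; exact: (irr a (tr _ _ _ hab hba)).
- exists a => x [<-|hx]; first exact: irr.
  move=> hax; case: (tri a b) => [//|[eab|hba]].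
  + subst; exact: Hb hx hax.
  + exact: Hb x hx (tr _ _ _ hba hax).
Qed.

Lemma nat_ub (I : list nat) : exists m, forall i, In i I -> (i <= m)%N.
Proof.
elim: I => [|a I [m Hm]]; first by exists 0%N.
exists (maxn a m) => i [<-|hi]; first exact: leq_maxl.
exact: leq_trans (Hm i hi) (leq_maxr _ _).
Qed.

Local Open Scope ring_scope.

Definition phi (W : Type) (P : nat -> nat -> Prop) (y : rat) (x : Xpt W) : Prop :=
  if y == 0 then x = None
  else exists n b, x = Some (n, b) /\ P (Nf y) n /\ (Kf y < n)%N.

Local Close Scope ring_scope.
Unset Implicit Arguments.

Theorem mainTheorem4 (W : Type) (lt : W -> W -> Prop) (f : W -> nat -> nat)
  (P : nat -> nat -> Prop) :
  is_omega1 lt ->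
  (forall a b, lt a b -> lt_star (f a) (f b)) ->
  (forall g : nat -> nat, exists a, lt_star g (f a)) ->
  partition_infinite P ->
  ~ selective Qopen (Xopen lt P f).
Proof.
move=> Hw _ _ [Pcov [Pdis Pinf]] Hsel.
have [w0] : inhabited W.
  apply: NNPP => nW. case: Hw => _ [_ [_ [_ [nocnt _]]]]. apply: nocnt.
  exists (fun _ => 0%N) => a; exfalso; apply: nW; exact: (inhabits a).
have H1 : forall y, (exists x, @phi W P y x) /\ is_closed (Xopen lt P f) (@phi W P y).
  move=> y; split.
  + rewrite /phi; case: (y == 0%R); first by exists None.
    have [n [hn Pn]] := Pinf (Nf y) (Kf y).+1.
    by exists (Some (n, w0)), n, w0.
  + rewrite /is_closed /Xopen /phi => hn.
    case: (y == 0%R) hn; first by move=> hn; exfalso; apply: hn.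
    move=> _; exists [:: Nf y], [::] => x HI _.
    case: x HI => [[n b]|] HI; last by move=> [n' [b' [E _]]].
    move=> [n' [b' [[<- _] [Pn _]]]].
    exact: (HI (Nf y) (or_introl erefl)).
have H2 : lower_semicontinuous Qopen (Xopen lt P f) (@phi W P).
  move=> Wo HWo q [x [phx Wx]].
  case q0: (q == 0%R).
  + move: phx; rewrite /phi q0 => Ex; subst x.
    have [I [A HIA]] := HWo Wx.
    have [m Hm] := nat_ub I.
    have [b Hb] := list_ub w0 Hw A.
    have [e [e0 He]] := Nbig m.
    move/eqP: q0 => ->.
    exists e; split => // r hr.
    rewrite GRing.subr0 in hr.
    case r0: (r == 0%R).
      by exists None; rewrite /phi ?r0.
    have [n [hn Pn]] := Pinf (Nf r) (Kf r).+1.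
    exists (Some (n, b)); split.
      by rewrite /phi ?r0; exists n, b.
    apply: HIA.
    * move=> i Hi /= Pin.
      have ei := Pdis n i (Nf r) Pin Pn.
      have := He r (negbT r0) hr. have := Hm i Hi. rewrite ei. lia.
    * move=> a Ha /= [_ hl]; exact: (Hb a Ha hl).
  + have [e [e0 He]] := Kf_loc (negbT q0).
    exists e; split => // r hr.
    have [r0 [nE kE]] := He r hr.
    exists x; split => //.
    move: phx; rewrite /phi q0 (negbTE r0) nE kE //.
have [s [scont ssel]] := Hsel (@phi W P) H1 H2.
pose h : nat -> W := fun m => match @unpickle rat m with
  | Some y => match s y with Some (_, b) => b | None => w0 end
  | None => w0 end.
have [rho Hrho] := bound_seq Hw h.
have hb : forall y n b, s y = Some (n, b) -> lt b rho.
  move=> y n b E; have := Hrho (pickle y); by rewrite /h pickleK E.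
have oW0 : Xopen lt P f (subZ lt P f rho).
  move=> _; exists [::], [:: rho] => x _ HA; apply: HA; by left.
have s0 : s 0%R = None by have := ssel 0%R; rewrite /phi eqxx.
have [e [e0 He]] : exists e : rat, (0 < e)%R /\ forall r, (`|r - 0| < e)%R -> subZ lt P f rho (s r).
  apply: (scont _ oW0 0%R); by rewrite s0.
have [r [r0 [hr hK]]] := Cwit (f rho) e0.
have := ssel r; rewrite /phi (negbTE r0) => -[n [b [E [Pn Kn]]]].
have := He r; rewrite GRing.subr0 => /(_ hr).
rewrite E /= => H; apply: H; split; last exact: hb E.
exists (Nf r); split => //. exact: leq_ltn_trans hK Kn.
Qed.
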